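(* Let $(V,o)$ be a normal surface singularity with $p_f(V,o)>0$ and $Z^2=-2$, and let $\pi\colon X\to V$ be the minimal resolution. Assume that the fundamental cycle $Z$ is essentially irreducible and that $D_m=Z_{min}$, where $D_m$ is the smallest term of the Yau sequence for $Z$. Then $(V,o)$ is numerically Gorenstein and its canonical cycle is $Z_K=p_f(V,o)\,Y$, where $Y$ is the Yau cycle.
   Context: Let $\pi^{-1}(o)=\bigcup_{i=1}^n E_i$ be the decomposition of the exceptional set into irreducible components. A cycle is a divisor $D=\sum d_iE_i$ with $d_i\in\mathbb Z$; $D_1\le D_2$ means coefficientwise inequality, $D_1<D_2$ means $D_1\le D_2$ and $D_1\ne D_2$; $\mathrm{supp}\,D$ is the union of the $E_i$ with $d_i\neq0$. $K=K_X$ is the canonical divisor of $X$, and for a cycle $D>0$ its arithmetic genus is $p_a(D)=1+\frac12(D^2+D\cdot K)$. The fundamental cycle $Z$ is the smallest cycle $D>0$ with support $\pi^{-1}(o)$ such that $D\cdot E_i\le0$ for all $i$; $p_f(V,o)=p_a(Z)$ is the fundamental genus and $-Z^2$ the degree. For cycles $C$ and $D>0$, ''$\mathcal O_D(-C)$ is numerically trivial'' means $C\cdot E=0$ for every irreducible component $E\le D$. When $p_f(V,o)>0$, $Z_{min}$ denotes the unique minimal cycle $0<Z_{min}\le Z$ with $p_a(Z_{min})=p_a(Z)$. Yau sequence: if $D$ is a cycle that is the fundamental cycle on its own support, with $Z_{min}\le D$, $p_a(D)=p_f(V,o)$ and $D\cdot E=0$ for every component $E\le Z_{min}$, its Tyurina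 component is the unique maximal cycle $0<D'<D$ such that $\mathcal O_{D'}(-D)$ is numerically trivial and $p_a(D')=p_a(D)$ (it is again the fundamental cycle on its support). Put $D_1=Z$ and let $D_{i+1}$ be the Tyurina component of $D_i$ as long as $D_i\cdot E=0$ for all components $E\le Z_{min}$; the process stops at the first $D_m$ with $D_m\cdot Z_{min}<0$ ($m=1$ if $Z\cdot Z_{min}<0$). The sequence $0<D_m<\dots<D_1=Z$ is the Yau sequence, $m$ its length, and $Y=\sum_{i=1}^mD_i$ the Yau cycle. A $(-2)$-curve is an irreducible exceptional curve $E$ which is a smooth rational curve with $E^2=-2$. $Z$ is essentially irreducible if there is an irreducible component $A\le Z$ which is not a $(-2)$-curve such that, with $k$ the coefficient of $A$ in $Z$, either $Z=kA$ or every irreducible component of $Z-kA$ is a $(-2)$-curve. The canonical cycle $Z_K$ is the cycle with rational coefficients supported on $\pi^{-1}(o)$ satisfying $Z_K\cdot E_i=-K\cdot E_i$ for all $i$; $(V,o)$ is numerically Gorenstein if $Z_K$ has integer coefficients. *)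

(* Defs.v *)
(* Numerical model of the minimal resolution of a normal
   surface singularity: exceptional components E_0..E_{n-1}, intersection
   matrix M (M i j = E_i . E_j), arithmetic genera g i = p_a(E_i).
   K.E_i is given by adjunction: K.E_i = 2 p_a(E_i) - 2 - E_i^2. *)
From HB Require Import structures.
From mathcomp Require Import all_boot all_order all_algebra.
Set Implicit Arguments. Unset Strict Implicit. Unset Printing Implicit Defensive.
Import Order.TTheory GRing.Theory Num.Theory.
Local Open Scope ring_scope.

Definition icycle (n : nat) := {ffun 'I_n -> int}.

Definition zeroC (n : nat) : icycle n := [ffun _ => 0].

Definition compC (n : nat) (i : 'I_n) : icycle n := [ffun j => (j == i)%:R].

Definition inter (n : nat) (M : 'M[int]_n) (D1 D2 : icycle n) : int :=
  \sum_(i < n) \sum_(j < n) D1 i * D2 j * M i j.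

Definition KE (n : nat) (M : 'M[int]_n) (g : 'I_n -> nat) (i : 'I_n) : int :=
  2 * (g i)%:Z - 2 - M i i.

Definition Kdot (n : nat) (M : 'M[int]_n) (g : 'I_n -> nat) (D : icycle n) : int :=
  \sum_(i < n) D i * KE M g i.

Definition pa (n : nat) (M : 'M[int]_n) (g : 'I_n -> nat) (D : icycle n) : rat :=
  1 + (inter M D D + Kdot M g D)%:~R / 2.

Definition leC (n : nat) (D1 D2 : icycle n) : Prop := forall i, D1 i <= D2 i.
Definition ltC (n : nat) (D1 D2 : icycle n) : Prop := leC D1 D2 /\ D1 <> D2.
Definition posC (n : nat) (D : icycle n) : Prop := ltC (zeroC n) D.

Definition exc_config (n : nat) (M : 'M[int]_n) (g : 'I_n -> nat) : Prop :=
  (0 < n)%N /\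
  (forall i j, M i j = M j i) /\
  (forall i j, i != j -> 0 <= M i j) /\
  (forall D : icycle n, D <> zeroC n -> inter M D D < 0) /\
  (forall i j, connect (fun a b => (a != b) && (0 < M a b)) i j) /\
  (* minimality: no smooth rational (-1)-curves *)
  (forall i, ~ (g i = 0%N /\ M i i = -1)).

Definition antinef_on (n : nat) (M : 'M[int]_n) (S : pred 'I_n) (D : icycle n) :=
  [/\ posC D, (forall i, (D i != 0) = S i) & (forall i, S i -> inter M D (compC i) <= 0)].

Definition is_fundamental_on (n : nat) (M : 'M[int]_n) (S : pred 'I_n) (D : icycle n) :=
  antinef_on M S D /\ (forall D', antinef_on M S D' -> leC D D').

Definition is_fundamental_cycle (n : nat) (M : 'M[int]_n) (Z : icycle n) :=
  is_fundamental_on M predT Z.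

Definition is_Zmin (n : nat) (M : 'M[int]_n) (g : 'I_n -> nat) (Z Zm : icycle n) :=
  [/\ posC Zm, leC Zm Z, pa M g Zm = pa M g Z &
      forall D, posC D -> leC D Z -> pa M g D = pa M g Z -> leC Zm D].

(* O_D(-C) numerically trivial: C.E = 0 for every component E <= D *)
Definition num_trivial (n : nat) (M : 'M[int]_n) (C D : icycle n) :=
  forall i, 0 < D i -> inter M C (compC i) = 0.

Definition is_tyurina (n : nat) (M : 'M[int]_n) (g : 'I_n -> nat) (D D' : icycle n) :=
  [/\ posC D', ltC D' D, num_trivial M D D', pa M g D' = pa M g D &
      forall D'', posC D'' -> ltC D'' D -> num_trivial M D D'' ->
        pa M g D'' = pa M g D -> leC D'' D'].

(* D 0, ..., D (m-1) is the Yau sequence D_1 > ... > D_m for Z *)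
Definition is_yau_seq (n : nat) (M : 'M[int]_n) (g : 'I_n -> nat) (Z Zm : icycle n)
    (m : nat) (D : nat -> icycle n) :=
  [/\ (0 < m)%N, D 0%N = Z,
      (forall i, (i.+1 < m)%N -> num_trivial M (D i) Zm /\ is_tyurina M g (D i) (D i.+1))
    & inter M (D m.-1) Zm < 0].

Definition yau_cycle (n : nat) (m : nat) (D : nat -> icycle n) : icycle n :=
  [ffun j => \sum_(i < m) D i j].

Definition minus2_curve (n : nat) (M : 'M[int]_n) (g : 'I_n -> nat) (i : 'I_n) :=
  g i = 0%N /\ M i i = -2.

Definition ess_irreducible (n : nat) (M : 'M[int]_n) (g : 'I_n -> nat) (Z : icycle n) :=
  exists A : 'I_n, [/\ 0 < Z A, ~ minus2_curve M g A &
    let k := Z A in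
    (forall j, Z j = (if j == A then k else 0)) \/
    (forall j, Z j - (if j == A then k else 0) != 0 -> minus2_curve M g j)].

Definition is_canonical_cycle (n : nat) (M : 'M[int]_n) (g : 'I_n -> nat)
    (ZK : 'I_n -> rat) :=
  forall i, \sum_(j < n) ZK j * (M j i)%:~R = - (KE M g i)%:~R.

Definition num_gorenstein (n : nat) (M : 'M[int]_n) (g : 'I_n -> nat) :=
  (exists ZK, is_canonical_cycle M g ZK) /\
  forall ZK, is_canonical_cycle M g ZK -> forall i, exists z : int, ZK i = z%:~R.

(* Main.v *)
Require Import Defs.
From HB Require Import structures.
From mathcomp Require Import all_boot all_order all_algebra.
From mathcomp Require Import zify ring lra.
Import Order.TTheory GRing.Theory Num.Theory.
Set Implicit Arguments. Unset Strict Implicit. Unset Printing Implicit Defensive.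
Local Open Scope ring_scope.
Section Main.
Variables (n : nat) (M : 'M[int]_n) (g : 'I_n -> nat).
Hypothesis Msym : forall i j, M i j = M j i.
Hypothesis Moff : forall i j, i != j -> 0 <= M i j.

Definition dot (X : icycle n) (i : 'I_n) : int := \sum_j X j * M j i.
Definition PP (X : icycle n) : int := inter M X X + Kdot M g X.

Lemma interE X Y : inter M X Y = \sum_i X i * dot Y i.
Proof.
rewrite /inter /dot; apply: eq_bigr => i _; rewrite mulr_sumr; apply: eq_bigr => j _.
by rewrite Msym mulrA.
Qed.

Lemma interC X Y : inter M X Y = inter M Y X.
Proof.
rewrite /inter exchange_big; apply: eq_bigr => i _; apply: eq_bigr => j _.
by rewrite Msym [X j * _]mulrC.
Qed.

Lemma dotD (X Y : icycle n) i : dot (X + Y) i = dot X i + dot Y i.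
Proof. by rewrite /dot -big_split; apply: eq_bigr => j _; rewrite ffunE mulrDl. Qed.

Lemma dotB (X Y : icycle n) i : dot (X - Y) i = dot X i - dot Y i.
Proof.
rewrite /dot -sumrB; apply: eq_bigr => j _; rewrite !ffunE mulrBl //.
Qed.

Lemma dot_comp E i : dot (compC E) i = M E i.
Proof.
rewrite /dot (bigD1 E) //= big1 ?ffunE ?eqxx ?mul1r ?addr0 // => j hj.
by rewrite ffunE (negbTE hj) mul0r.
Qed.

Lemma inter_compr X E : inter M X (compC E) = dot X E.
Proof.
rewrite interC interE (bigD1 E) //= big1 ?ffunE ?eqxx ?mul1r ?addr0 // => j hj.
by rewrite ffunE (negbTE hj) mul0r.
Qed.

Lemma inter_addl X Y W : inter M (X + Y) W = inter M X W + inter M Y W.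
Proof. by rewrite !interE -big_split; apply: eq_bigr => i _; rewrite ffunE mulrDl. Qed.

Lemma inter_subl X Y W : inter M (X - Y) W = inter M X W - inter M Y W.
Proof. by rewrite !interE -sumrB; apply: eq_bigr => i _; rewrite !ffunE mulrBl. Qed.

Lemma inter_addr X Y W : inter M W (X + Y) = inter M W X + inter M W Y.
Proof. by rewrite ![inter M W _]interC inter_addl. Qed.

Lemma inter_subr X Y W : inter M W (X - Y) = inter M W X - inter M W Y.
Proof. by rewrite ![inter M W _]interC inter_subl. Qed.

Lemma KdotD X Y : Kdot M g (X + Y) = Kdot M g X + Kdot M g Y.
Proof. by rewrite /Kdot -big_split; apply: eq_bigr => i _; rewrite ffunE mulrDl. Qed.

Lemma KdotB X Y : Kdot M g (X - Y) = Kdot M g X - Kdot M g Y.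
Proof. by rewrite /Kdot -sumrB; apply: eq_bigr => i _; rewrite !ffunE mulrBl. Qed.

Lemma PPD X Y : PP (X + Y) = PP X + PP Y + 2 * inter M X Y.
Proof.
rewrite /PP inter_addl !inter_addr KdotD (interC Y X); ring.
Qed.

Lemma Kdot_comp E : Kdot M g (compC E) = KE M g E.
Proof.
rewrite /Kdot (bigD1 E) //= big1 ?ffunE ?eqxx ?mul1r ?addr0 // => j hj.
by rewrite ffunE (negbTE hj) mul0r.
Qed.

Lemma PP_comp E : PP (compC E) = 2 * (g E)%:Z - 2.
Proof. rewrite /PP Kdot_comp inter_compr dot_comp /KE; ring. Qed.

Lemma dot_ge0 (X : icycle n) i : (forall j, 0 <= X j) -> X i = 0 -> 0 <= dot X i.
Proof.
move=> h0 hi; rewrite /dot; apply: sumr_ge0 => j _.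
have [->|hj] := eqVneq j i; first by rewrite hi mul0r.
by apply: mulr_ge0 => //; apply: Moff.
Qed.

Lemma dot_le (X Y : icycle n) i : (forall j, X j <= Y j) -> X i = Y i -> dot X i <= dot Y i.
Proof.
move=> hle heq; rewrite -subr_ge0 -dotB; apply: dot_ge0 => [j|]; rewrite !ffunE.
  by rewrite subr_ge0.
by rewrite heq subrr.
Qed.

Lemma dot_ge_term (X : icycle n) i j : (forall l, 0 <= X l) -> X i = 0 -> X j * M j i <= dot X i.
Proof.
move=> h0 hi; rewrite /dot (bigD1 j) //= lerDl; apply: sumr_ge0 => l _.
have [->|hl] := eqVneq l i; first by rewrite hi mul0r.
by apply: mulr_ge0 => //; apply: Moff.
Qed.

Lemma inter_nt (X C : icycle n) : (forall j, 0 <= X j) -> num_trivial M C X -> inter M X C = 0.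
Proof.
move=> h0 hnt; rewrite interE big1 // => i _.
have := h0 i; rewrite le0r => /orP[/eqP->|hp]; first by rewrite mul0r.
by have := hnt i hp; rewrite inter_compr => ->; rewrite mulr0.
Qed.

Definition sz (X : icycle n) : nat := \sum_i `|X i|%N.

Lemma sz_lt (X Y : icycle n) E : (forall i, i != E -> `|X i|%N = `|Y i|%N) ->
  (`|X E| < `|Y E|)%N -> (sz X < sz Y)%N.
Proof.
move=> heq hlt; rewrite /sz (bigD1 E) //= [X in (_ < X)%N](bigD1 E) //=.
rewrite (eq_bigr (fun i => `|Y i|%N)) => [|i /heq //].
by rewrite ltn_add2r.
Qed.

Hypothesis Hconn : forall i j, connect (fun a b => (a != b) && (0 < M a b)) i j.

Lemma fullsupp (X : icycle n) : (forall j, 0 <= X j) -> (exists j, X j != 0) ->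
  (forall E, dot X E <= 0) -> forall E, 0 < X E.
Proof.
move=> h0 [j0 hj0] hneg E.
have p0 : 0 < X j0 by rewrite lt0r hj0 h0.
move: (Hconn j0 E) => /connectP [p hp ->].
elim: p j0 hj0 p0 hp => [|x p IH] j0 hj0 p0 /= hp; first done.
move: hp => /andP[/andP[hne hM] hp].
have hx : 0 < X x.
  rewrite lt0r h0 andbT; apply/eqP => hx0.
  have h1 := dot_ge_term j0 h0 hx0.
  have h2 := hneg x.
  have h3 : 0 < X j0 * M j0 x by rewrite mulr_gt0.
  lia.
by apply: (IH x) => //; rewrite lt0r_neq0.
Qed.

Lemma PP_even (X : icycle n) : (forall j, 0 <= X j) -> exists t, PP X = 2 * t.
Proof.
move=> h0; have [k] := ubnP (sz X); elim: k X h0 => // k IH X h0 hk.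
case: (pickP (fun i => 0 < X i)) => [E hE | hnone].
- set X' := X - compC E.
  have h0' : forall j, 0 <= X' j.
    move=> j; rewrite /X' !ffunE; have [->|hj] := eqVneq j E.
      by rewrite /=; lia.
    by rewrite subr0.
  have hlt : (sz X' < sz X)%N.
    apply: (sz_lt (E := E)) => [i hi|]; rewrite /X' !ffunE.
      by rewrite (negbTE hi) subr0.
    rewrite eqxx /=; move: hE; lia.
  have [t ht] := IH X' h0' (leq_trans hlt (ltnSE hk)).
  have -> : X = X' + compC E by rewrite subrK.
  rewrite PPD PP_comp ht.
  by exists (t + (g E)%:Z - 1 + inter M X' (compC E)); ring.
- have -> : X = 0.
    apply/ffunP => i; rewrite ffunE; have := hnone i; have := h0 i; move=> /= a b.
    by apply/eqP; rewrite eq_le a andbT leNgt b.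
  exists 0; rewrite /PP interE /Kdot !big1 // => i _; rewrite ffunE mul0r //.
Qed.

Variable Z : icycle n.
Hypothesis HZ : is_fundamental_cycle M Z.

Lemma Zanti E : dot Z E <= 0.
Proof. by case: HZ => -[_ _ h] _; rewrite -inter_compr; apply: h. Qed.

Lemma Zpos i : 0 < Z i.
Proof.
case: HZ => -[[hle _] hs _] _; have := hs i; rewrite /= => hi.
by rewrite lt0r hi; have := hle i; rewrite ffunE.
Qed.

Lemma L1 (X : icycle n) : (forall j, 0 <= X j <= Z j) -> (exists j, X j != 0) ->
  PP X <= PP Z.
Proof.
move=> hX hnz; have [k] := ubnP (sz (Z - X)); elim: k X hX hnz => // k IH X hX hnz hk.
case: (pickP (fun E => 0 < dot X E)) => [E hE | hnone].
- have hXE : X E < Z E.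
    rewrite lt_neqAle; have /andP[_ ->] := hX E; rewrite andbT; apply/eqP => heq.
    have := dot_le (X := X) (Y := Z) (i := E) (fun j => (andP (hX j)).2) heq.
    have := Zanti E; move: hE => /= hE; lia.
  set X' := X + compC E.
  have hX' : forall j, 0 <= X' j <= Z j.
    move=> j; rewrite /X' !ffunE; have [->|hj] := eqVneq j E.
      by rewrite /=; have := hX E; move: hXE; lia.
    by rewrite addr0; apply: hX.
  have hlt : (sz (Z - X')%R < sz (Z - X)%R)%N.
    apply: (sz_lt (E := E)) => [i hi|]; rewrite /X' !ffunE.
      by rewrite (negbTE hi) addr0.
    rewrite eqxx /=; move: hXE; lia.
  have hnz' : exists j, X' j != 0.
    exists E; rewrite /X' !ffunE eqxx /=; have := hX E; lia.
  have := IH X' hX' hnz' (leq_trans hlt (ltnSE hk)).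
  rewrite /X' PPD PP_comp inter_compr; move: hE => /= hE; lia.
- have hneg : forall E, dot X E <= 0 by move=> E; have := hnone E; rewrite /= leNgt => ->.
  have hpos := fullsupp (fun j => (andP (hX j)).1) hnz hneg.
  have hZX : leC Z X.
    apply: HZ.2; split.
    + split; first by move=> i; rewrite ffunE; exact: (andP (hX i)).1.
      move=> h0; case: hnz => j; rewrite -h0 ffunE eqxx //.
    + by move=> i; rewrite /= lt0r_neq0.
    + by move=> i _; rewrite inter_compr.
  have -> : X = Z by apply/ffunP => i; apply/eqP; rewrite eq_le (hZX i) andbT; case/andP: (hX i).
  done.
Qed.

Variables (Zm : icycle n) (m : nat) (D : nat -> icycle n) (A : 'I_n).
Hypothesis Hnd : forall X : icycle n, (exists j, X j != 0) -> inter M X X < 0.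
Hypothesis Hmin1 : forall i, ~ (g i = 0%N /\ M i i = -1).
Hypothesis HpaZ : 0 < pa M g Z.
Hypothesis HZZ : inter M Z Z = -2.
Hypothesis HA : ~ minus2_curve M g A.
Hypothesis Hm2 : forall j, j != A -> minus2_curve M g j.
Hypothesis HZm : is_Zmin M g Z Zm.
Hypothesis Hyau : is_yau_seq M g Z Zm m D.
Hypothesis Hlast : D m.-1 = Zm.

Definition kap := KE M g A.

Lemma nz_of_posC (X : icycle n) : posC X -> exists j, X j != 0.
Proof.
move=> [_ hne]; case: (pickP (fun j => X j != 0)) => [j hj|hn]; first by exists j.
exfalso; apply: hne; apply/ffunP => j; rewrite ffunE; have := hn j; rewrite /=.
by move/negbFE/eqP.
Qed.

Lemma ge0_of_posC (X : icycle n) : posC X -> forall j, 0 <= X j.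
Proof. by move=> [h _] j; have := h j; rewrite ffunE. Qed.

Lemma MAA_lt0 : M A A < 0.
Proof.
have := Hnd (X := compC A); rewrite inter_compr dot_comp; apply.
by exists A; rewrite ffunE eqxx.
Qed.

Lemma kap_ge1 : 1 <= kap.
Proof.
rewrite /kap /KE; have := MAA_lt0; have h1 := @Hmin1 A.
have h2 := HA; rewrite /minus2_curve in h2.
have [hg|hg] := eqVneq (g A) 0%N.
  move=> hM.
  have h3 : M A A != -1 by apply/eqP => e; apply: h1.
  have h4 : M A A != -2 by apply/eqP => e; apply: h2.
  move: h3 h4 hg hM; lia.
move: hg; lia.
Qed.

Lemma KE_other j : j != A -> KE M g j = 0.
Proof. by move=> /Hm2 [h1 h2]; rewrite /KE h1 h2. Qed.

Lemma KdotE (X : icycle n) : Kdot M g X = X A * kap.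
Proof.
rewrite /Kdot (bigD1 A) //= big1 ?addr0 // => j hj.
by rewrite KE_other // mulr0.
Qed.

Lemma PPE (X : icycle n) : PP X = inter M X X + X A * kap.
Proof. by rewrite /PP KdotE. Qed.

Lemma paPP (X Y : icycle n) : pa M g X = pa M g Y -> PP X = PP Y.
Proof.
rewrite /pa => h.
have : ((inter M X X + Kdot M g X)%:~R : rat) = (inter M Y Y + Kdot M g Y)%:~R.
  have : ((inter M X X + Kdot M g X)%:~R : rat) / 2 = (inter M Y Y + Kdot M g Y)%:~R / 2.
    by move: h => /addrI.
  by move=> /(congr1 (fun x => x * 2)); rewrite !divfK.
by move/eqP; rewrite eqr_int => /eqP.
Qed.

Lemma PPpa (X Y : icycle n) : PP X = PP Y -> pa M g X = pa M g Y.
Proof. by rewrite /pa /PP => ->. Qed.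

Lemma c_ge0 : 0 <= PP Z.
Proof.
have h : ((-2)%:~R : rat) < (PP Z)%:~R.
  move: HpaZ; rewrite /pa /PP => h.
  set x := ((inter M Z Z + Kdot M g Z)%:~R : rat) in h *.
  have -> : ((-2)%:~R : rat) = -2 by [].
  lra.
rewrite ltr_int in h.
have [t ht] := PP_even (fun j => ltW (Zpos j)).
move: h; rewrite ht; lia.
Qed.

Lemma cE : PP Z = Z A * kap - 2.
Proof. by rewrite PPE HZZ addrC. Qed.

Lemma m_gt0 : (0 < m)%N. Proof. by case: Hyau. Qed.
Lemma D0 : D 0 = Z. Proof. by case: Hyau. Qed.
Lemma tyu i : (i.+1 < m)%N -> is_tyurina M g (D i) (D i.+1).
Proof. by case: Hyau => _ _ h _ /h []. Qed.
Lemma ntZm i : (i.+1 < m)%N -> num_trivial M (D i) Zm.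
Proof. by case: Hyau => _ _ h _ /h []. Qed.

Lemma S1 i : (i < m)%N ->
  [/\ (forall j, 0 <= D i j), (forall j, D i j <= Z j), PP (D i) = PP Z
    & exists j, D i j != 0].
Proof.
elim: i => [_|i IH hi].
  rewrite D0; split=> //.
  - by move=> j; exact: ltW (Zpos j).
  - by exists A; rewrite lt0r_neq0 // Zpos.
have [h0 hZ hP hnz] := IH (ltnW hi).
have [hpos [hle _] _ hpa _] := tyu hi.
split.
- exact: ge0_of_posC hpos.
- by move=> j; apply: le_trans (hZ j); apply: hle.
- by rewrite (paPP hpa).
- exact: nz_of_posC hpos.
Qed.

Lemma addcE (Y : icycle n) E j : (Y + compC E) j = Y j + (j == E)%:R.
Proof. by rewrite !ffunE. Qed.
Lemma subcE (Y : icycle n) E j : (Y - compC E) j = Y j - (j == E)%:R.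
Proof. by rewrite !ffunE. Qed.

Lemma PP_addc (Y : icycle n) E : PP (Y + compC E) = PP Y + 2 * (g E)%:Z - 2 + 2 * dot Y E.
Proof. by rewrite PPD PP_comp inter_compr; ring. Qed.

Lemma PP_subc (Y : icycle n) E :
  PP (Y - compC E) = PP Y - 2 * (g E)%:Z + 2 - 2 * dot Y E + 2 * M E E.
Proof.
have := PP_addc (Y - compC E) E; rewrite subrK dotB dot_comp => ->; ring.
Qed.

Lemma posC_of (X : icycle n) : (forall j, 0 <= X j) -> (exists j, X j != 0) -> posC X.
Proof.
move=> h0 [j hj]; split; first by move=> i; rewrite ffunE.
by move=> h; move: hj; rewrite -h ffunE eqxx.
Qed.

Lemma S2 i j : (i <= j)%N -> (j < m)%N -> forall E, D j E <= D i E.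
Proof.
move=> hij hj; elim: j hij hj => [|j IH] hij hj E.
  by move: hij; rewrite leqn0 => /eqP ->.
move: hij; rewrite leq_eqVlt => /orP[/eqP -> //|hij].
have [_ [hle _] _ _ _] := tyu hj.
by apply: le_trans (hle E) _; apply: IH => //; exact: ltnW.
Qed.

Lemma S3 i l E : (i < l)%N -> (l < m)%N -> 0 < D l E -> dot (D i) E = 0.
Proof.
move=> hil hl hE.
have hi : (i.+1 < m)%N by apply: leq_ltn_trans hl.
have [_ _ hnt _ _] := tyu hi.
rewrite -inter_compr; apply: hnt.
exact: lt_le_trans hE (S2 hil hl E).
Qed.

Lemma S4 i l : (i < m)%N -> (l < m)%N -> i != l -> inter M (D i) (D l) = 0.
Proof.
have key : forall i l, (i < l)%N -> (l < m)%N -> inter M (D l) (D i) = 0.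
  move=> i' l' hil hl; have [h0 _ _ _] := S1 hl.
  apply: inter_nt => // E hE; rewrite inter_compr; exact: S3 hil hl hE.
move=> hi hl; case: (ltngtP i l) => [hil|hli|->] // _.
  by rewrite interC; apply: key.
by apply: key.
Qed.

Lemma S6 i : (i < m)%N -> 0 < D i A.
Proof.
move=> hi; have [h0 _ hP hnz] := S1 hi.
rewrite lt0r h0 andbT; apply/eqP => hA.
have h1 := Hnd hnz; have h2 := c_ge0.
move: hP; rewrite PPE hA mul0r addr0; lia.
Qed.

Lemma cand i (X : icycle n) : (i.+1 < m)%N -> (forall j, 0 <= X j) ->
  (forall j, X j <= D i j) -> (forall j, 0 < X j -> dot (D i) j = 0) ->
  PP X = PP Z -> (exists j, X j != 0) -> forall j, X j <= D i.+1 j.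
Proof.
move=> hi h0 hle hnt hP hnz.
have [hD0 _ hPD hDnz] := S1 (ltnW hi).
have [_ _ _ _ hmax] := tyu hi.
have hntX : num_trivial M (D i) X by move=> j hj; rewrite inter_compr; exact: hnt.
have hXD : X <> D i.
  move=> hX; have := Hnd hDnz; have := inter_nt h0 hntX; rewrite hX => ->.
  by rewrite ltxx.
apply: hmax.
- exact: posC_of.
- by split.
- exact: hntX.
- by apply: PPpa; rewrite hP hPD.
Qed.

Lemma S5 i : (i < m)%N -> forall E, 0 < D i E -> dot (D i) E <= 0.
Proof.
elim: i => [_|i IH hi] E hE; first by rewrite D0; exact: Zanti.
rewrite leNgt; apply/negP => hpos.
have hdi : dot (D i) E = 0 := S3 (ltnSn i) hi hE.
have [h0i hZi hPi _] := S1 (ltnW hi).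
have [h0j hZj hPj hnzj] := S1 hi.
have [_ [hle _] _ _ _] := tyu hi.
have hF : D i.+1 E < D i E.
  rewrite lt_neqAle (hle E) andbT; apply/eqP => heq.
  have := dot_le (X := D i.+1) (Y := D i) (i := E) hle heq.
  by rewrite hdi; move: hpos; lia.
set X := D i.+1 + compC E.
have hX0 : forall j, 0 <= X j.
  by move=> j; rewrite addcE; have := h0j j; case: (j == E) => /=; lia.
have hXle : forall j, X j <= D i j.
  move=> j; rewrite addcE; have [->|hj] := eqVneq j E => /=.
    by move: hF; lia.
  by rewrite addr0.
have hnzX : exists j, X j != 0.
  by exists E; rewrite addcE eqxx /=; have := h0j E; lia.
have hPX : PP X = PP Z.
  apply/eqP; rewrite eq_le; apply/andP; split.
    apply: L1 => // j; rewrite hX0 /=; exact: le_trans (hXle j) (hZi j).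
  by rewrite /X PP_addc hPj; move: hpos; lia.
have hntX : forall j, 0 < X j -> dot (D i) j = 0.
  move=> j; rewrite addcE; have [->|hj] := eqVneq j E => //= hj0.
  by apply: S3 (ltnSn i) hi _; move: hj0; rewrite addr0.
have := cand hi hX0 hXle hntX hPX hnzX E.
by rewrite addcE eqxx /=; lia.
Qed.

Lemma base E : E != A -> 0 < Zm E -> dot Zm E = 0.
Proof.
move=> hEA hE; have [g0 mEE] := Hm2 hEA.
have hm : (m.-1 < m)%N by rewrite prednK // m_gt0.
have [h0 hZ hP _] := S1 hm; rewrite Hlast in h0 hZ hP.
have hA := S6 hm; rewrite Hlast in hA.
have hle := S5 hm; rewrite Hlast in hle; have {}hle := hle E hE.
apply/eqP; rewrite eq_le hle /=; rewrite leNgt; apply/negP => hneg.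
set X := Zm - compC E.
have hX0 : forall j, 0 <= X j.
  move=> j; rewrite subcE; have [->|hj] := eqVneq j E => /=; last by rewrite subr0.
  by move: hE; lia.
have hXZ : forall j, X j <= Z j.
  move=> j; rewrite subcE; have := hZ j; case: (j == E) => /=; lia.
have hnz : exists j, X j != 0.
  by exists A; rewrite subcE (eq_sym A E) (negbTE hEA) subr0 lt0r_neq0.
have hPX : PP X = PP Z.
  apply/eqP; rewrite eq_le; apply/andP; split.
    by apply: L1 => // j; rewrite hX0 hXZ.
  by rewrite /X PP_subc g0 mEE hP; move: hneg; lia.
case: HZm => _ _ _ hmin.
have := hmin X (posC_of hX0 hnz) hXZ (PPpa hPX) E.
by rewrite subcE eqxx /=; lia.
Qed.

Lemma am_one (am x : int) : 1 <= am -> am * x = -1 -> am = 1 /\ x = -1.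
Proof.
move=> h1 h2; have [hx|hx] := lerP 0 x.
  have := mulr_ge0 (ltW (lt_le_trans ltr01 h1)) hx; lia.
have : 0 <= am * (-x - 1) by apply: mulr_ge0; lia.
rewrite mulrBr mulrN mulr1; lia.
Qed.

Definition Yf i : icycle n := [ffun E => \sum_(i <= j < m) D j E].

Lemma dot_Yf i E : dot (Yf i) E = \sum_(i <= j < m) dot (D j) E.
Proof.
rewrite /dot; under eq_bigr do rewrite ffunE mulr_suml.
by rewrite exchange_big.
Qed.

Lemma inter_Yf (X : icycle n) i : inter M X (Yf i) = \sum_(i <= j < m) inter M X (D j).
Proof.
rewrite interE; under eq_bigr do rewrite dot_Yf mulr_sumr.
by rewrite exchange_big; apply: eq_bigr => j _; rewrite interE.
Qed.

Definition G i := forall E, E != A -> 0 < D i E -> dot (Yf i) E = 0.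

Lemma G_last : G m.-1.
Proof.
move=> E hEA hE; rewrite dot_Yf -{2}(prednK m_gt0) big_nat1 Hlast.
by apply: base => //; rewrite -Hlast.
Qed.

Lemma Fge0 i : (i.+1 < m)%N -> forall E, 0 <= D i E - D i.+1 E.
Proof. by move=> hi E; rewrite subr_ge0; apply: S2. Qed.

Lemma Ufacts i E : (i.+1 < m)%N -> E != A -> 0 < D i E -> D i.+1 E = 0 ->
  [/\ -1 <= dot (D i) E <= 0, 0 <= dot (D i.+1) E <= 1,
      (dot (D i.+1) E = 1 -> dot (D i) E = -1)
    & 0 <= \sum_(i.+2 <= j < m) dot (D j) E].
Proof.
move=> hi hEA hE hEj.
have [g0 mEE] := Hm2 hEA.
have hi' : (i < m)%N := ltnW hi.
have [h0i hZi hPi hnzi] := S1 hi'.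
have [h0j hZj hPj hnzj] := S1 hi.
have hA := S6 hi.
have hAE : A != E by rewrite eq_sym.
have hle0 := S5 hi' hE.
have hge1 : -1 <= dot (D i) E.
  set X := D i - compC E.
  have hX0 : forall j, 0 <= X j.
    move=> j; rewrite subcE; have [->|hj] := eqVneq j E => /=; last by rewrite subr0.
    by move: hE; lia.
  have hXZ : forall j, X j <= Z j.
    move=> j; rewrite subcE; have := hZi j; case: (j == E) => /=; lia.
  have hnz : exists j, X j != 0.
    exists A; rewrite subcE (negbTE hAE) subr0 lt0r_neq0 //.
    exact: lt_le_trans hA (S2 (leqnSn i) hi A).
  have := L1 (X := X) (fun j => introT andP (conj (hX0 j) (hXZ j))) hnz.
  by rewrite /X PP_subc g0 mEE hPi; lia.
have hj0 : 0 <= dot (D i.+1) E by apply: dot_ge0.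
have hj1 : dot (D i.+1) E <= 1.
  set X := D i.+1 + compC E.
  have hX0 : forall j, 0 <= X j.
    by move=> j; rewrite addcE; have := h0j j; case: (j == E) => /=; lia.
  have hXZ : forall j, X j <= Z j.
    move=> j; rewrite addcE; have [->|hj] := eqVneq j E => /=; last by rewrite addr0.
    by rewrite hEj; have := Zpos E; lia.
  have hnz : exists j, X j != 0 by exists E; rewrite addcE eqxx hEj /=.
  have := L1 (X := X) (fun j => introT andP (conj (hX0 j) (hXZ j))) hnz.
  by rewrite /X PP_addc g0 hPj; lia.
split; [by rewrite hge1 hle0 | by rewrite hj0 hj1 | |].
- move=> h1.
  suff : dot (D i) E != 0 by move: hge1 hle0; lia.
  apply/eqP => h0.
  set X := D i.+1 + compC E.
  have hX0 : forall j, 0 <= X j.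
    by move=> j; rewrite addcE; have := h0j j; case: (j == E) => /=; lia.
  have hXle : forall j, X j <= D i j.
    move=> j; rewrite addcE; have [->|hj] := eqVneq j E => /=; last first.
      by rewrite addr0; apply: S2.
    by rewrite hEj; move: hE; lia.
  have hnt : forall j, 0 < X j -> dot (D i) j = 0.
    move=> j; rewrite addcE; have [->|hj] := eqVneq j E => //= hjj.
    by apply: S3 (ltnSn i) hi _; move: hjj; rewrite addr0.
  have hnz : exists j, X j != 0 by exists E; rewrite addcE eqxx hEj /=.
  have hPX : PP X = PP Z by rewrite /X PP_addc g0 hPj h1; ring.
  have := cand hi hX0 hXle hnt hPX hnz E.
  by rewrite addcE eqxx hEj /=.
- rewrite big_nat; apply: sumr_ge0 => j /andP[h1 h2]; apply: dot_ge0.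
    by have [] := S1 h2.
  have := S2 (ltnW h1) h2 E; rewrite hEj; have [h0 _ _ _] := S1 h2; have := h0 E; lia.
Qed.

Lemma uE i E : (i.+1 < m)%N -> E != A -> 0 < D i E -> D i.+1 E = 0 ->
  dot (D i) E + dot (D i.+1) E <= 0.
Proof.
move=> hi hEA hE hEj; have [/andP[h1 h2] /andP[h3 h4] h5 _] := Ufacts hi hEA hE hEj.
have [e|ne] := eqVneq (dot (D i.+1) E) 1; first by rewrite (h5 e) e.
by move: ne h2 h3 h4; lia.
Qed.

Lemma addE (Y W : icycle n) j : (Y + W) j = Y j + W j.
Proof. by rewrite ffunE. Qed.

Lemma pospart_sub (a b : int) :
  (if 0 <= a - b then a - b else 0) - (if 0 <= b - a then b - a else 0) = a - b.
Proof. by case: ifP => h1; case: ifP => h2; lia. Qed.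

Lemma step i : (i.+1 < m)%N -> G i.+1 -> G i.
Proof.
move=> hi IH E hEA hE.
have hi' : (i < m)%N := ltnW hi.
have [h0i hZi hPi hnzi] := S1 hi'.
have [h0j hZj hPj hnzj] := S1 hi.
have hle : forall j, D i.+1 j <= D i j := S2 (leqnSn i) hi.
have hnt : forall j, 0 < D i.+1 j -> dot (D i) j = 0 := fun j => S3 (ltnSn i) hi.
have hAj : 0 < D i.+1 A := S6 hi.
have hF0 := Fge0 hi.
have hsplit : forall E', dot (Yf i) E' = dot (D i) E' + dot (Yf i.+1) E'.
  by move=> E'; rewrite !dot_Yf big_ltn.
have hsplit' : forall E', dot (Yf i.+1) E' =
    dot (D i.+1) E' + \sum_(i.+2 <= j < m) dot (D j) E'.
  by move=> E'; rewrite dot_Yf big_ltn.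
rewrite hsplit.
have [hEj|hEj] := boolP (0 < D i.+1 E).
  by rewrite hnt // IH // addr0.
have hEj0 : D i.+1 E = 0 by move: hEj (h0j E); rewrite -leNgt; lia.
have o1 : inter M (D i) (D i.+1) = 0 by apply: S4 => //; rewrite neq_ltn ltnSn.
have o2 : inter M (D i.+1) (D i) = 0 by rewrite interC.
have hFi : \sum_E' (D i E' - D i.+1 E') * dot (D i) E' = inter M (D i) (D i).
  have := interE (D i - D i.+1) (D i); rewrite inter_subl o2 subr0 => ->.
  by apply: eq_bigr => j _; rewrite !ffunE.
have hFj : \sum_E' (D i E' - D i.+1 E') * dot (D i.+1) E' = - inter M (D i.+1) (D i.+1).
  have := interE (D i - D i.+1) (D i.+1); rewrite inter_subl o1 sub0r => ->.
  by apply: eq_bigr => j _; rewrite !ffunE.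
have hFY : \sum_E' (D i E' - D i.+1 E') * dot (Yf i.+1) E' = - inter M (D i.+1) (D i.+1).
  have := interE (D i - D i.+1) (Yf i.+1); rewrite inter_subl !inter_Yf.
  rewrite [X in X - _]big_nat big1 ?sub0r; last first.
    by move=> j /andP[h1 h2]; apply: S4 => //; rewrite neq_ltn h1.
  rewrite big_ltn // big_nat big1 ?addr0; last first.
    move=> j /andP[h1 h2]; apply: S4 => //.
    by rewrite neq_ltn h1.
  move=> ->; apply: eq_bigr => j _; rewrite !ffunE.
  done.
have hK : inter M (D i) (D i) - inter M (D i.+1) (D i.+1) = - ((D i A - D i.+1 A) * kap).
  by move: hPi hPj; rewrite !PPE; nia.
have [hnd|hd] := eqVneq (D i A) (D i.+1 A).
-
  have hS : \sum_E' (D i E' - D i.+1 E') * (dot (D i) E' + dot (D i.+1) E') = 0.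
    under eq_bigr do rewrite mulrDr.
    by rewrite big_split /= hFi hFj hK hnd subrr mul0r oppr0.
  have tle0 : forall E', 0 <= - ((D i E' - D i.+1 E') * (dot (D i) E' + dot (D i.+1) E')).
    move=> E'; rewrite oppr_ge0.
    have [hE'j|hE'j] := boolP (0 < D i.+1 E').
      by rewrite hnt // add0r; apply: mulr_ge0_le0 => //; apply: S5.
    have hE'j0 : D i.+1 E' = 0 by move: hE'j (h0j E'); rewrite -leNgt; lia.
    have [hE'i|hE'i] := boolP (0 < D i E'); last first.
      have -> : D i E' = 0 by move: hE'i (h0i E'); rewrite -leNgt; lia.
      by rewrite hE'j0 subrr mul0r.
    have hE'A : E' != A by apply/eqP => e; move: hAj; rewrite -e hE'j0 ltxx.
    by apply: mulr_ge0_le0 => //; apply: uE.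
  have u0 : forall E', E' != A -> 0 < D i E' -> D i.+1 E' = 0 ->
      dot (D i) E' + dot (D i.+1) E' = 0.
    move=> E' hE'A hE'i hE'j.
    have := psumr_eq0P (P := predT) (fun j _ => tle0 j); rewrite sumrN hS oppr0.
    move=> /(_ erefl E' isT) /eqP; rewrite oppr_eq0 mulf_eq0 hE'j subr0.
    by rewrite (gt_eqF hE'i) /= => /eqP.
  have hT : \sum_E' (D i E' - D i.+1 E') * (dot (D i) E' + dot (Yf i.+1) E') = 0.
    under eq_bigr do rewrite mulrDr.
    by rewrite big_split /= hFi hFY hK hnd subrr mul0r oppr0.
  have tge0 : forall E', 0 <= (D i E' - D i.+1 E') * (dot (D i) E' + dot (Yf i.+1) E').
    move=> E'.
    have [hE'j|hE'j] := boolP (0 < D i.+1 E').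
      rewrite hnt // add0r; have [->|hE'A] := eqVneq E' A.
        by rewrite hnd subrr mul0r.
      by rewrite IH // mulr0.
    have hE'j0 : D i.+1 E' = 0 by move: hE'j (h0j E'); rewrite -leNgt; lia.
    have [hE'i|hE'i] := boolP (0 < D i E'); last first.
      have -> : D i E' = 0 by move: hE'i (h0i E'); rewrite -leNgt; lia.
      by rewrite hE'j0 subrr mul0r.
    have hE'A : E' != A by apply/eqP => e; move: hAj; rewrite -e hE'j0 ltxx.
    apply: mulr_ge0 => //; rewrite hsplit' addrA u0 // add0r.
    by have [_ _ _] := Ufacts hi hE'A hE'i hE'j0.
  have := psumr_eq0P (P := predT) (fun j _ => tge0 j) hT (i := E) isT.
  by move/eqP; rewrite mulf_eq0 hEj0 subr0 (gt_eqF hE) /= => /eqP.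
-
  have ha' : D i.+1 A < D i A by rewrite lt_neqAle eq_sym hd /= hle.
  have hm : (m.-1 < m)%N by rewrite prednK // m_gt0.
  have hjm : (i.+1 <= m.-1)%N by rewrite -ltnS prednK // m_gt0.
  have ham : forall E', Zm E' <= D i.+1 E' by move=> E'; rewrite -Hlast; apply: S2.
  have ham1 : 0 < Zm A by rewrite -Hlast; apply: S6.
  have [h0m hZm hPm hnzm] := S1 hm; rewrite Hlast in h0m hZm hPm hnzm.
  have hqj := Hnd hnzj; have hqm := Hnd hnzm.
  have hk1 := kap_ge1.
  have hPj' := hPj; rewrite PPE cE in hPj'.
  have hPm' := hPm; rewrite PPE cE in hPm'.
  have haZ := hZi A.
  have [hkap [ha'k hqj1]] : kap = 1 /\ D i.+1 A = Z A - 1 /\ inter M (D i.+1) (D i.+1) = -1.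
    by nia.
  rewrite hkap in hPm'.
  have [hamk hqm1] : Zm A = Z A - 1 /\ inter M Zm Zm = -1 by have := ham A; lia.
  have hbase : inter M Zm Zm = Zm A * dot Zm A.
    rewrite interE (bigD1 A) //= big1 ?addr0 // => j hj.
    have := h0m j; rewrite le0r => /orP[/eqP->|hp]; first by rewrite mul0r.
    by rewrite base // mulr0.
  have [hZmA1 hdZA] : Zm A = 1 /\ dot Zm A = -1.
    by apply: am_one; [lia | rewrite -hbase].
  have hc0 : PP Z = 0 by rewrite cE hkap; lia.
  have hFA : D i A - D i.+1 A = 1 by lia.
  have hlast : i.+2 = m.
    apply/eqP; rewrite eqn_leq hi /= leqNgt; apply/negP => hlt.
    have hntm := ntZm hlt.
    pose H : icycle n := [ffun E' => if 0 <= Zm E' - (D i E' - D i.+1 E')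
                          then Zm E' - (D i E' - D i.+1 E') else 0].
    pose H' : icycle n := [ffun E' => if 0 <= (D i E' - D i.+1 E') - Zm E'
                          then (D i E' - D i.+1 E') - Zm E' else 0].
    have hHH : H - H' = Zm - (D i - D i.+1).
      by apply/ffunP => j; rewrite !ffunE; apply: pospart_sub.
    have hH0 : forall j, 0 <= H j by move=> j; rewrite ffunE; case: ifP => h; lia.
    have hH'0 : forall j, 0 <= H' j by move=> j; rewrite ffunE; case: ifP => h; lia.
    have hHz : forall j, H j = 0.
      case: (pickP (fun j => H j != 0)) => [j0 hj0|hnone]; last first.
        by move=> j; have := hnone j; move/negbFE/eqP.
      exfalso; have hneg := Hnd (ex_intro _ j0 hj0).
      suff : 0 <= inter M H H by lia.
      rewrite interE; apply: sumr_ge0 => E' _.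
      have /orP[/eqP hz|hp] : (0 == H E') || (0 < H E') by rewrite -le_eqVlt.
        by rewrite -hz mul0r.
      apply: mulr_ge0 (ltW hp) _.
      have hlt' : D i E' - D i.+1 E' < Zm E'.
        by move: hp; rewrite ffunE; case: ifP => h; lia.
      have hZE : 0 < Zm E' by have := hF0 E'; lia.
      have hE'A : E' != A.
        by apply/eqP => e; move: hlt'; rewrite e hFA hZmA1; lia.
      have hdj : dot (D i.+1) E' = 0 by rewrite -inter_compr; apply: hntm.
      have hdi : dot (D i) E' = 0 by apply: hnt; exact: lt_le_trans hZE (ham E').
      have hdH : dot H E' = dot H' E'.
        apply/eqP; rewrite -subr_eq0 -dotB hHH dotB dotB base // hdj hdi.
        by rewrite !subrr.
      rewrite hdH; apply: dot_ge0 => //.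
      by rewrite ffunE; case: ifP => h; lia.
    have hZmF : forall j, Zm j <= D i j - D i.+1 j.
      by move=> j; have := hHz j; rewrite ffunE; case: ifP => h; lia.
    set X := D i.+1 + Zm.
    have hX0 : forall j, 0 <= X j by move=> j; rewrite addE; have := h0j j; have := h0m j; lia.
    have hXle : forall j, X j <= D i j by move=> j; rewrite addE; have := hZmF j; lia.
    have hntX : forall j, 0 < X j -> dot (D i) j = 0.
      move=> j; rewrite addE => hj; apply: hnt; have := ham j; have := h0m j; lia.
    have hPX : PP X = PP Z.
      rewrite /X PPD hPj hPm hc0 interC inter_nt //; lia.
    have hnzX : exists j, X j != 0 by exists A; rewrite addE; have := h0j A; lia.
    have := cand hi hX0 hXle hntX hPX hnzX A.
    by rewrite addE; lia.
  have hYj : forall E', dot (Yf i.+1) E' = dot (D i.+1) E'.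
    by move=> E'; rewrite hsplit' -hlast big_geq ?addr0.
  have hDjZm : D i.+1 = Zm by rewrite -Hlast -hlast.
  have hS : \sum_E' (D i E' - D i.+1 E') * (dot (D i) E' + dot (D i.+1) E') = -1.
    under eq_bigr do rewrite mulrDr.
    by rewrite big_split /= hFi hFj; move: hK; rewrite hFA hkap; lia.
  have hdjA : dot (D i.+1) A = -1 by rewrite hDjZm.
  rewrite (bigD1 A) //= hFA (hnt A hAj) hdjA add0r mul1r in hS.
  have hS' := hS; rewrite -[RHS]addr0 in hS'; move/addrI in hS'.
  have tle0 : forall E', E' != A ->
      0 <= - ((D i E' - D i.+1 E') * (dot (D i) E' + dot (D i.+1) E')).
    move=> E' hE'A; rewrite oppr_ge0.
    have [hE'j|hE'j] := boolP (0 < D i.+1 E').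
      rewrite hnt // add0r hDjZm base ?mulr0 //; by rewrite -hDjZm.
    have hE'j0 : D i.+1 E' = 0 by move: hE'j (h0j E'); rewrite -leNgt; lia.
    have [hE'i|hE'i] := boolP (0 < D i E'); last first.
      have -> : D i E' = 0 by move: hE'i (h0i E'); rewrite -leNgt; lia.
      by rewrite hE'j0 subrr mul0r.
    by apply: mulr_ge0_le0 => //; apply: uE.
  have hsum : \sum_(E' | E' != A)
      - ((D i E' - D i.+1 E') * (dot (D i) E' + dot (D i.+1) E')) = 0.
    by rewrite sumrN hS' oppr0.
  have := psumr_eq0P tle0 hsum hEA.
  move/eqP; rewrite oppr_eq0 mulf_eq0 hEj0 subr0 (gt_eqF hE) /= => /eqP.
  by rewrite hYj.
Qed.

Lemma G_all d : forall i, (i + d)%N = m.-1 -> G i.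
Proof.
elim: d => [|d IH] i h; first by move: h; rewrite addn0 => ->; exact: G_last.
have hi : (i.+1 < m)%N by move: h (m_gt0); lia.
apply: step => //; apply: IH; move: h; lia.
Qed.

Lemma G0 E : E != A -> dot (Yf 0) E = 0.
Proof. by move=> hE; apply: (@G_all m.-1 0) => //; rewrite D0 Zpos. Qed.

Lemma YZ : inter M Z (Yf 0) = -2.
Proof.
rewrite inter_Yf big_ltn ?m_gt0 // D0 HZZ big_nat big1 ?addr0 //.
move=> j /andP[h1 h2]; rewrite -D0; apply: S4 => //; first exact: m_gt0.
by rewrite neq_ltn h1.
Qed.

Lemma YZ2 : Z A * dot (Yf 0) A = -2.
Proof.
rewrite -YZ interE (bigD1 A) //= big1 ?addr0 // => j hj.
by rewrite G0 // mulr0.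
Qed.

Lemma intr_sumI (F : 'I_n -> int) : ((\sum_j F j)%:~R : rat) = \sum_j (F j)%:~R.
Proof. by rewrite rmorph_sum. Qed.

Lemma uniq_rat (W : 'I_n -> rat) :
  (forall i, \sum_j W j * (M j i)%:~R = 0) -> forall i, W i = 0.
Proof.
move=> hW i0.
pose N : int := \prod_j denq (W j).
have hN : 0 < N by apply: prodr_gt0 => j _; exact: denq_gt0.
pose X : icycle n := [ffun j => numq (W j) * \prod_(l | l != j) denq (W l)].
have hXW : forall j, ((X j)%:~R : rat) = W j * N%:~R.
  move=> j; rewrite /X /N ffunE [X in _ = _ * X%:~R](bigD1 j) //= !intrM.
  have hb : ((denq (W j))%:~R : rat) != 0 by rewrite intr_eq0 gt_eqF // denq_gt0.
  have e := divq_num_den (W j).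
  set c := ((\prod_(l | l != j) denq (W l))%:~R : rat).
  set a := ((numq (W j))%:~R : rat) in e *.
  set b := ((denq (W j))%:~R : rat) in e hb *.
  rewrite -e; by field.
have hdot : forall i, dot X i = 0.
  move=> i; apply: (@intr_inj rat); rewrite /dot rmorph_sum /=.
  under eq_bigr do rewrite intrM hXW mulrAC.
  by rewrite -mulr_suml hW mul0r.
have hX0 : forall j, X j = 0.
  move=> j; apply/eqP; apply/negPn/negP => hj.
  have := Hnd (ex_intro _ j hj); rewrite interE big1 ?ltxx // => l _.
  by rewrite hdot mulr0.
have h := hXW i0; rewrite hX0 in h.
have h2 : W i0 * N%:~R = 0 by rewrite -h.
by move/eqP: h2; rewrite mulf_eq0 intr_eq0 (gt_eqF hN) orbF => /eqP.
Qed.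

Lemma main_res : num_gorenstein M g /\
  (forall ZK, is_canonical_cycle M g ZK ->
     forall i, ZK i = pa M g Z * (yau_cycle m D i)%:~R).
Proof.
have hY : yau_cycle m D = Yf 0 by apply/ffunP => j; rewrite !ffunE big_mkord.
have hpa : pa M g Z = 1 + (PP Z)%:~R / 2 by [].
have hky : ((Z A)%:~R : rat) * (dot (Yf 0) A)%:~R = -2.
  by rewrite -intrM YZ2.
have hcan : is_canonical_cycle M g (fun j => pa M g Z * (yau_cycle m D j)%:~R).
  move=> i; rewrite hY.
  have -> : \sum_j pa M g Z * ((Yf 0) j)%:~R * (M j i)%:~R =
            pa M g Z * (dot (Yf 0) i)%:~R.
    rewrite /dot intr_sumI mulr_sumr; apply: eq_bigr => j _.
    by rewrite intrM mulrA.
  have [->|hiA] := eqVneq i A.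
    rewrite hpa cE rmorphB /= intrM -/kap.
    set k := ((Z A)%:~R : rat) in hky *; set y := ((dot (Yf 0) A)%:~R : rat) in hky *.
    set q := (kap%:~R : rat).
    have -> : (1 + (k * q - 2%:~R) / 2) * y = q * (k * y) / 2.
      by rewrite [2%:~R]/=; field.
    by rewrite hky /KE -/kap; field.
  by rewrite G0 // mulr0 KE_other // oppr0.
have huniq : forall ZK, is_canonical_cycle M g ZK ->
    forall i, ZK i = pa M g Z * (yau_cycle m D i)%:~R.
  move=> ZK hZK i; apply/eqP; rewrite -subr_eq0; apply/eqP.
  apply: (uniq_rat (W := fun j => ZK j - pa M g Z * (yau_cycle m D j)%:~R)) => l.
  under eq_bigr do rewrite mulrBl.
  by rewrite sumrB hZK hcan subrr.
split=> //; split; first by exists (fun j => pa M g Z * (yau_cycle m D j)%:~R).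
move=> ZK hZK i; rewrite (huniq ZK hZK i).
have [t ht] := PP_even (fun j => ltW (Zpos j)).
exists ((1 + t) * yau_cycle m D i).
by rewrite hpa ht intrM rmorphD rmorphM /=; field.
Qed.
End Main.

Unset Implicit Arguments.

Theorem theorem3p5 (n : nat) (M : 'M[int]_n) (g : 'I_n -> nat)
    (Z Zm : icycle n) (m : nat) (D : nat -> icycle n) :
  exc_config M g ->
  is_fundamental_cycle M Z ->
  0 < pa M g Z ->
  inter M Z Z = -2 ->
  ess_irreducible M g Z ->
  is_Zmin M g Z Zm ->
  is_yau_seq M g Z Zm m D ->
  D m.-1 = Zm ->
  num_gorenstein M g /\
  (forall ZK, is_canonical_cycle M g ZK ->
     forall i, ZK i = pa M g Z * (yau_cycle m D i)%:~R).
Proof.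
move=> [hn [Msym [Moff [Hnd0 [Hconn Hmin1]]]]] HZ HpaZ HZZ [A [hZA hA hor]] HZm Hyau Hlast.
have Hnd : forall X : icycle n, (exists j, X j != 0) -> inter M X X < 0.
  move=> X [j hj]; apply: Hnd0 => h; move: hj; rewrite h ffunE eqxx //.
have hZnz : forall j, Z j != 0.
  by move=> j; case: HZ => -[_ hs _] _; rewrite hs.
have Hm2 : forall j, j != A -> minus2_curve M g j.
  move=> j hj; case: hor => h.
    by exfalso; move: (hZnz j); rewrite h (negbTE hj) eqxx.
  by apply: h; rewrite (negbTE hj) subr0.
exact: (main_res Msym Moff Hconn HZ Hnd Hmin1 HpaZ HZZ hA Hm2 HZm Hyau Hlast).
Qed.
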